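(* Let $\eta>0$ and consider the network (NonAut-II-$\eta$) with species $\Lambda_1,\mathrm{I}_1,\Lambda_2,\mathrm{I}_2$ and reactions \[ 1:\ \eta\Lambda_1+\Lambda_2\to\eta\Lambda_1+\mathrm{I}_2,\quad 2:\ \mathrm{I}_2\to\Lambda_2,\quad 3:\ \eta\Lambda_2+\Lambda_1\to\eta\Lambda_2+\mathrm{I}_1,\quad 4:\ \mathrm{I}_1\to\Lambda_1, \] with the associated ODEs \[ \begin{cases} [\dot\Lambda_1]=-r_3([\Lambda_2],[\Lambda_1])+r_4([\mathrm{I}_1]),\\ [\dot{\mathrm I}_1]=r_3([\Lambda_2],[\Lambda_1])-r_4([\mathrm{I}_1]),\\ [\dot\Lambda_2]=-r_1([\Lambda_1],[\Lambda_2])+r_2([\mathrm{I}_2]),\\ [\dot{\mathrm I}_2]=r_1([\Lambda_1],[\Lambda_2])-r_2([\mathrm{I}_2]), \end{cases} \] where all rates are monotone chemical functions, under the kinetic symmetry constraints $r_1\equiv r_3\equiv r_o$ and $r_2\equiv r_4\equiv r_e$ (as functions of their ordered arguments). Let $\partial_1 r_o,\partial_2 r_o$ denote the derivatives of $r_o$ with respect to its first and second arguments and $\partial_I r_e$ the derivative of $r_e$, evaluated at a homogeneous steady state. Then the system has the capacity for zero-eigenvalue bifurcation and consequently differentiation, with bifurcation condition \[ \partial_2 r_o+\partial_I r_e=\partial_1 r_o, \] and the existence of an unstable (homogeneous) steady state requires $\partial_2 r_o+\partial_I r_e<\partial_1 r_o$. The unique associated instability motif, represented by a non-autocatalytic unstable-positive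 feedback, which generates the necessary instability is the subnetwork with species $\{\Lambda_1,\Lambda_2\}$ and reactions $\{1:\ \eta\Lambda_1+\Lambda_2\to\eta\Lambda_1+\dots,\ 3:\ \eta\Lambda_2+\Lambda_1\to\eta\Lambda_2+\dots\}$.
   Context: A rate function is monotone chemical if it is nonnegative, positive exactly when all its reactant concentrations are positive, independent of non-reactant concentrations, and has positive partial derivative in each reactant concentration at positive concentrations; kinetics are parameter-rich, so partial derivatives at a positive steady state can be prescribed as arbitrary positive numbers. The system has the conservation laws $[\Lambda_1]+[\mathrm I_1]$ and $[\Lambda_2]+[\mathrm I_2]$; capacity for zero-eigenvalue bifurcation means there exist admissible derivative values at a homogeneous positive steady state ($[\Lambda_1]=[\Lambda_2]$, $[\mathrm I_1]=[\mathrm I_2]$) for which the Jacobian restricted to the invariant set fixing these conserved quantities is singular. For a network with stoichiometric matrix $S_{mj}$ (net production of species $m$ in reaction $j$), a $k$-Child-Selection triple consists of $k$ species $\kappa$, $k$ reactions $E_\kappa$ and a bijection $J:\kappa\to E_\kappa$ such that each species in $\kappa$ is a reactant of its assigned reaction; its CS-matrix is $S[\kappa]_{ml}=S_{m,J(X_l)}$. An unstable-positive feedback is a $k\times k$ CS-matrix with $\operatorname{sign}\det=(-1)^{k-1}$ and no proper principal $k'\times k'$ submatrix with determinant of sign $(-1)^{k'-1}$; it is non-autocatalytic if it is not Metzler (some off-diagonal entry negative). Its instability motif is the subnetwork consisting of species $\kappa$ and reactions $E_\kappa$, disregarding other species. *)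

(* Defs.v *)
From HB Require Import structures.
From mathcomp Require Import all_boot all_order all_algebra.
From mathcomp Require Import complex.
Set Implicit Arguments. Unset Strict Implicit. Unset Printing Implicit Defensive.
Import Order.TTheory GRing.Theory Num.Theory.
Local Open Scope ring_scope.

(* Species (index in 'I_4):  Lambda1 = 0, I1 = 1, Lambda2 = 2, I2 = 3.
   Reactions (index in 'I_4): reaction 1 = 0, 2 = 1, 3 = 2, 4 = 3.
     1 : eta L1 + L2 -> eta L1 + I2
     2 : I2 -> L2
     3 : eta L2 + L1 -> eta L2 + I1
     4 : I1 -> L1                                                           *)

Definition sL1 : 'I_4 := @Ordinal 4 0 isT.
Definition sI1 : 'I_4 := @Ordinal 4 1 isT.
Definition sL2 : 'I_4 := @Ordinal 4 2 isT.
Definition sI2 : 'I_4 := @Ordinal 4 3 isT.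
Definition rx1 : 'I_4 := @Ordinal 4 0 isT.
Definition rx2 : 'I_4 := @Ordinal 4 1 isT.
Definition rx3 : 'I_4 := @Ordinal 4 2 isT.
Definition rx4 : 'I_4 := @Ordinal 4 3 isT.

Section Network.
Variable R : rcfType.

Definition reac_coef (eta : R) (m j : 'I_4) : R :=
  match nat_of_ord j, nat_of_ord m with
  | 0, 0 => eta | 0, 2 => 1
  | 1, 3 => 1
  | 2, 2 => eta | 2, 0 => 1
  | 3, 1 => 1
  | _, _ => 0
  end.

Definition prod_coef (eta : R) (m j : 'I_4) : R :=
  match nat_of_ord j, nat_of_ord m with
  | 0, 0 => eta | 0, 3 => 1
  | 1, 2 => 1
  | 2, 2 => eta | 2, 1 => 1
  | 3, 0 => 1
  | _, _ => 0
  end.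

Definition stoich (eta : R) : 'M[R]_4 :=
  \matrix_(m < 4, j < 4) (prod_coef eta m j - reac_coef eta m j).

Definition is_reactant (eta : R) (m j : 'I_4) : bool := 0 < reac_coef eta m j.

(* Admissible derivative values at a (homogeneous, positive) steady state:
   D j m = d r_j / d [m].  Monotone chemical + parameter-rich kinetics: the
   derivative is an arbitrary positive number when m is a reactant of j, and 0
   otherwise.  Kinetic symmetry r1 = r3 = r_o, r2 = r4 = r_e evaluated at a
   homogeneous steady state ([L1]=[L2], [I1]=[I2]) identifies
     d1 r_o = D 1 L1 = D 3 L2,  d2 r_o = D 1 L2 = D 3 L1,
     dI r_e = D 2 I2 = D 4 I1.                                              *)
Definition admissible (eta : R) (D : 'M[R]_4) : Prop :=
  [/\ forall j m, is_reactant eta m j -> 0 < D j m,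
      forall j m, ~~ is_reactant eta m j -> D j m = 0,
      D rx1 sL1 = D rx3 sL2,
      D rx1 sL2 = D rx3 sL1 &
      D rx2 sI2 = D rx4 sI1].

Definition d1_ro (D : 'M[R]_4) : R := D rx1 sL1.
Definition d2_ro (D : 'M[R]_4) : R := D rx1 sL2.
Definition dI_re (D : 'M[R]_4) : R := D rx2 sI2.

(* Jacobian of  x' = S r(x)  *)
Definition jac (eta : R) (D : 'M[R]_4) : 'M[R]_4 := stoich eta *m D.

(* tangent space of the invariant set fixing [L1]+[I1] and [L2]+[I2] *)
Definition tangent {T : nmodType} (v : 'cV[T]_4) : Prop :=
  v sL1 ord0 + v sI1 ord0 = 0 /\ v sL2 ord0 + v sI2 ord0 = 0.

Definition restr_singular (J : 'M[R]_4) : Prop :=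
  exists v : 'cV[R]_4, [/\ v != 0, tangent v & J *m v = 0].

Definition restr_unstable (J : 'M[R]_4) : Prop :=
  exists (lam : R[i]) (v : 'cV[R[i]]_4),
    [/\ v != 0, tangent v,
        map_mx (fun x : R => Complex x 0) J *m v = lam *: v &
        0 < complex.Re lam].

Definition CS_triple (eta : R) (k : nat) (kap Jf : 'I_k -> 'I_4) : Prop :=
  [/\ injective kap, injective Jf & forall l, is_reactant eta (kap l) (Jf l)].

Definition csmat (eta : R) (k : nat) (kap Jf : 'I_k -> 'I_4) : 'M[R]_k :=
  \matrix_(m < k, l < k) stoich eta (kap m) (Jf l).

Definition principal (k : nat) (M : 'M[R]_k) (A : {set 'I_k}) : 'M[R]_#|A| :=
  \matrix_(i < #|A|, j < #|A|) M (enum_val i) (enum_val j).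

Definition sign_unstable (n : nat) (M : 'M[R]_n) : Prop :=
  0 < (-1) ^+ n.-1 * \det M.

Definition unstable_positive (k : nat) (M : 'M[R]_k) : Prop :=
  [/\ (0 < k)%N, sign_unstable M &
      forall A : {set 'I_k}, (0 < #|A| < k)%N -> ~ sign_unstable (principal M A)].

(* non-autocatalytic = not Metzler *)
Definition non_autocatalytic (k : nat) (M : 'M[R]_k) : Prop :=
  exists i j, i != j /\ M i j < 0.

Definition motif_species (k : nat) (kap : 'I_k -> 'I_4) : {set 'I_4} :=
  [set kap l | l : 'I_k].
Definition motif_reactions (k : nat) (Jf : 'I_k -> 'I_4) : {set 'I_4} :=
  [set Jf l | l : 'I_k].

End Network.

(* Main.v *)
Require Import Defs.
From HB Require Import structures.
From mathcomp Require Import all_boot all_order all_algebra.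
From mathcomp Require Import complex ring lra.
Import Order.TTheory GRing.Theory Num.Theory.
Local Open Scope ring_scope.
Set Implicit Arguments. Unset Strict Implicit. Unset Printing Implicit Defensive.

Lemma det2 (R : comNzRingType) (A : 'M[R]_2) :
  \det A = A 0 0 * A 1 1 - A 0 1 * A 1 0.
Proof.
rewrite (expand_det_row _ ord0) !big_ord_recl big_ord0 /cofactor !det_mx11 !mxE /=.
rewrite addr0 expr0 expr1 !mul1r mulN1r mulrN.
have -> : lift ord0 ord0 = 1 :> 'I_2 by apply: val_inj.
by have -> : lift 1 0 = 0 :> 'I_2 by apply: val_inj.
Qed.

Lemma ord4_cases (P : 'I_4 -> Prop) : P sL1 -> P sI1 -> P sL2 -> P sI2 -> forall i, P i.
Proof.
move=> h0 h1 h2 h3 [[|[|[|[|i]]]] Hi] //.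
- by have -> : Ordinal Hi = sL1 by apply: val_inj.
- by have -> : Ordinal Hi = sI1 by apply: val_inj.
- by have -> : Ordinal Hi = sL2 by apply: val_inj.
- by have -> : Ordinal Hi = sI2 by apply: val_inj.
Qed.

Lemma sum4 (V : nmodType) (f : 'I_4 -> V) :
  \sum_(i < 4) f i = f sL1 + f sI1 + f sL2 + f sI2.
Proof.
rewrite !big_ord_recl big_ord0 addr0 !addrA.
by repeat f_equal; apply: val_inj.
Qed.

Definition S0 (m j : nat) : int :=
  match j, m with
  | 0, 2 => -1 | 0, 3 => 1
  | 1, 2 => 1 | 1, 3 => -1
  | 2, 0 => -1 | 2, 1 => 1
  | 3, 0 => 1 | 3, 1 => -1
  | _, _ => 0 end.

Definition reacb (m j : nat) : bool :=
  match j, m with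
  | 0, 0 | 0, 2 | 1, 3 | 2, 2 | 2, 0 | 3, 1 => true
  | _, _ => false end.

Section S.
Variable R : rcfType.
Variable eta : R.
Hypothesis heta : 0 < eta.

Lemma stoichE (m j : 'I_4) : stoich eta m j = (S0 m j)%:~R.
Proof.
rewrite mxE; elim/ord4_cases: m; elim/ord4_cases: j; rewrite /= ?subrr ?subr0 ?sub0r //.
Qed.

Lemma reactE (m j : 'I_4) : is_reactant eta m j = reacb m j.
Proof.
rewrite /is_reactant; elim/ord4_cases: m; elim/ord4_cases: j; rewrite /= ?ltxx ?ltr01 //.
Qed.

Definition Dn (a b c : R) (j m : nat) : R :=
  match j, m with
  | 0, 0 => a | 0, 2 => b | 1, 3 => c | 2, 0 => b | 2, 2 => a | 3, 1 => c
  | _, _ => 0 end.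
Definition Dmat a b c : 'M[R]_4 := \matrix_(j < 4, m < 4) Dn a b c j m.

Definition Jn (a b c : R) (m n : nat) : R :=
  match m, n with
  | 0, 0 => - b | 0, 1 => c | 0, 2 => - a
  | 1, 0 => b | 1, 1 => - c | 1, 2 => a
  | 2, 0 => - a | 2, 2 => - b | 2, 3 => c
  | 3, 0 => a | 3, 2 => b | 3, 3 => - c
  | _, _ => 0 end.
Definition Jmat a b c : 'M[R]_4 := \matrix_(m < 4, n < 4) Jn a b c m n.

Lemma jacE a b c : jac eta (Dmat a b c) = Jmat a b c.
Proof.
apply/matrixP => m n; rewrite /jac [in LHS]mxE sum4 !stoichE !mxE.
elim/ord4_cases: m; elim/ord4_cases: n => /=; ring.
Qed.

Lemma admE D : admissible eta D ->
  D = Dmat (D rx1 sL1) (D rx1 sL2) (D rx2 sI2).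
Proof.
case=> _ H0 e1 e2 e3; apply/matrixP => j m; rewrite mxE.
elim/ord4_cases: m; elim/ord4_cases: j => //=;
  try (apply: H0; by rewrite reactE).
Qed.

Lemma admD a b c : 0 < a -> 0 < b -> 0 < c -> admissible eta (Dmat a b c).
Proof.
move=> ha hb hc; split; try by rewrite !mxE.
- move=> j m; rewrite reactE mxE; elim/ord4_cases: m; elim/ord4_cases: j => //=.
- move=> j m; rewrite reactE mxE; elim/ord4_cases: m; elim/ord4_cases: j => //=.
Qed.
End S.

Lemma alg (F : comNzRingType) (lam x y A B C : F) :
  -B*x + C*(-x) + -A*y + 0*(-y) = lam*x ->
  -A*x + 0*(-x) + -B*y + C*(-y) = lam*y ->
  (lam + (B+C+A))*(x+y) = 0 /\ (lam + (B+C-A))*(x-y) = 0.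
Proof.
move=> e1 e2; split.
  have -> : (lam + (B+C+A))*(x+y) = (lam*x - (-B*x + C*(-x) + -A*y + 0*(-y)))
     + (lam*y - (-A*x + 0*(-x) + -B*y + C*(-y))) by ring.
  by rewrite -e1 -e2 !subrr addr0.
have -> : (lam + (B+C-A))*(x-y) = (lam*x - (-B*x + C*(-x) + -A*y + 0*(-y)))
     - (lam*y - (-A*x + 0*(-x) + -B*y + C*(-y))) by ring.
by rewrite -e1 -e2 !subrr ?subr0.
Qed.

Section S.
Variable R : rcfType.

Lemma vzero {T : nmodType} (v : 'cV[T]_4) : tangent v ->
  v sL1 ord0 = 0 -> v sL2 ord0 = 0 -> v = 0.
Proof.
case=> t1 t2 h1 h2; apply/matrixP => i j; rewrite (ord1 j) mxE.
elim/ord4_cases: i => //.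
- by rewrite -t1 h1 add0r.
- by rewrite -t2 h2 add0r.
Qed.

Lemma unst (a b c : R) : 0 < a -> 0 < b -> 0 < c ->
  restr_unstable (Jmat a b c) -> b + c < a.
Proof.
move=> ha hb hc [lam [v [vn0 tv ev ipos]]].
have [t1 t2] := tv.
move/matrixP: ev => ev; have e1 := ev sL1 ord0.
have e2 := ev sL2 ord0.
move: e1 e2; rewrite /= !mxE !sum4 !mxE /=.
have -> : v sI1 ord0 = - v sL1 ord0 by apply/eqP; rewrite -addr_eq0 addrC t1.
have -> : v sI2 ord0 = - v sL2 ord0 by apply/eqP; rewrite -addr_eq0 addrC t2.
set x := v sL1 ord0; set y := v sL2 ord0.
have key : forall r : R, Complex r 0 = (r%:C)%C by [].
rewrite !key !rmorphN !rmorph0 => e1 e2.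
have [E1 E2] := alg e1 e2.
move: E1 E2; rewrite -!rmorphD -rmorphB => E1 E2.
move/eqP: E1; rewrite mulf_eq0 => /orP [].
  rewrite addr_eq0 => /eqP el; move: ipos; rewrite el -rmorphN /=; lra.
move/eqP => exy.
move/eqP: E2; rewrite mulf_eq0 => /orP [].
  rewrite addr_eq0 => /eqP el; move: ipos; rewrite el -rmorphN /=; lra.
move/eqP => exy2.
have x0 : x = 0.
  have : x + x = 0 by rewrite -exy {2}(_ : x = y) //; apply/eqP; rewrite -subr_eq0 exy2.
  by rewrite -mulr2n => /eqP; rewrite mulrn_eq0 /= => /eqP.
have y0 : y = 0 by move: exy; rewrite x0 add0r.
by move: vn0; rewrite (vzero tv x0 y0) eqxx.
Qed.

Definition vsing : 'cV[R]_4 :=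
  \col_(i < 4) (match val i with 0 => 1 | 1 => -1 | 2 => -1 | _ => 1 end).

Lemma vsing_ok (a b c : R) : b + c = a ->
  [/\ vsing != 0, tangent vsing & Jmat a b c *m vsing = 0].
Proof.
move=> e; split.
- apply/negP => /eqP /matrixP /(_ sL1 ord0); rewrite !mxE /=.
  by move/eqP; rewrite oner_eq0.
- by split; rewrite !mxE /= ?subrr ?addrN ?addNr.
- apply/matrixP => i j; rewrite (ord1 j) !mxE sum4 !mxE.
  rewrite -e; elim/ord4_cases: i => /=; ring.
Qed.

Lemma sing (a b c : R) : 0 < a -> 0 < b -> 0 < c ->
  restr_singular (Jmat a b c) <-> b + c = a.
Proof.
move=> ha hb hc; split; last first.
  by move=> e; exists vsing; apply: vsing_ok.
case=> v [vn0 tv ev].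
have [t1 t2] := tv.
move/matrixP: ev => ev; have e1 := ev sL1 ord0.
have e2 := ev sL2 ord0.
move: e1 e2; rewrite !mxE !sum4 !mxE /=.
have -> : v sI1 ord0 = - v sL1 ord0 by apply/eqP; rewrite -addr_eq0 addrC t1.
have -> : v sI2 ord0 = - v sL2 ord0 by apply/eqP; rewrite -addr_eq0 addrC t2.
set x := v sL1 ord0; set y := v sL2 ord0.
move=> e1 e2.
have [E1 E2] := alg (lam := 0) (etrans e1 (esym (mul0r x))) (etrans e2 (esym (mul0r y))).
move/eqP: E1; rewrite add0r mulf_eq0 => /orP [/eqP E|/eqP exy]; first lra.
move/eqP: E2; rewrite add0r mulf_eq0 => /orP [/eqP E|/eqP exy2]; first lra.
have x0 : x = 0.
  have : x + x = 0 by rewrite -{2}(subrK y x) exy2 add0r.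
  by rewrite -mulr2n => /eqP; rewrite mulrn_eq0 /= => /eqP.
have y0 : y = 0 by move: exy; rewrite x0 add0r.
by move: vn0; rewrite (vzero tv x0 y0) eqxx.
Qed.
End S.

Lemma ord2_cases (P : 'I_2 -> Prop) : P 0 -> P 1 -> forall i, P i.
Proof.
move=> h0 h1 [[|[|i]] Hi] //.
- by have -> : Ordinal Hi = 0 by apply: val_inj.
- by have -> : Ordinal Hi = 1 by apply: val_inj.
Qed.

Lemma imset2 (T : finType) (f : 'I_2 -> T) : [set f l | l : 'I_2] = [set f 0; f 1].
Proof.
apply/setP => x; apply/imsetP/set2P => [[l _ ->]|[]->].
- by elim/ord2_cases: l; [left|right].
- by exists 0.
- by exists 1.
Qed.

Lemma enum2 (k0 k1 j0 j1 : 'I_4) : reacb k0 j0 -> reacb k1 j1 -> k0 != k1 -> j0 != j1 ->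
  (0 < - (S0 k0 j0 * S0 k1 j1 - S0 k0 j1 * S0 k1 j0))%R ->
  ((k0 == sL1) && (k1 == sL2) || (k0 == sL2) && (k1 == sL1)) &&
  ((j0 == rx1) && (j1 == rx3) || (j0 == rx3) && (j1 == rx1)).
Proof.
elim/ord4_cases: k0; elim/ord4_cases: k1; elim/ord4_cases: j0; elim/ord4_cases: j1; by [].
Qed.

Lemma small (A : {set 'I_4}) p q : (p \in A) = false -> (q \in A) = false -> p != q ->
  (#|A| <= 2)%N.
Proof.
move=> hp hq pq.
have : A \subset ~: [set p; q].
  apply/subsetP => x xA; rewrite !inE; apply/norP; split; apply/eqP => e; subst x.
  - by rewrite hp in xA.
  - by rewrite hq in xA.
have h := cardsC [set p; q]; rewrite cards2 pq card_ord in h.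
move/subset_leq_card; rewrite -(leq_add2l 2) h.
by rewrite -(leq_add2l 2).
Qed.

Section S.
Variable R : rcfType.
Variable eta : R.
Hypothesis heta : 0 < eta.

Lemma csE k (kap Jf : 'I_k -> 'I_4) i l : csmat eta kap Jf i l = (S0 (kap i) (Jf l))%:~R.
Proof. by rewrite mxE stoichE. Qed.

Lemma det_pair k (kap Jf : 'I_k -> 'I_4) m1 m2 p q :
  kap m1 = p -> kap m2 = q -> p != q ->
  (forall j : 'I_4, S0 p j + S0 q j = 0)%R ->
  \det (csmat eta kap Jf) = 0.
Proof.
move=> e1 e2 pq hs; apply/eqP/det0P.
have m12 : m1 != m2 by apply: contraNneq pq => e; rewrite -e1 -e2 e.
exists (\row_i (((i == m1)%:R + (i == m2)%:R) : R)).
  apply/negP => /eqP/matrixP/(_ 0 m1); rewrite !mxE eqxx (negPf m12) addr0.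
  by move/eqP; rewrite oner_eq0.
apply/matrixP => i l; rewrite !mxE.
under eq_bigr => j _ do rewrite mxE mulrDl.
rewrite big_split /= (bigD1 m1) //= big1 => [|j /negPf ->]; last by rewrite mul0r.
rewrite (bigD1 m2) //= big1 => [|j /negPf ->]; last by rewrite mul0r.
by rewrite !eqxx !mul1r !addr0 !csE e1 e2 -intrD hs.
Qed.

Definition kap2 (l : 'I_2) : 'I_4 := if val l == 0%N then sL1 else sL2.
Definition Jf2 (l : 'I_2) : 'I_4 := if val l == 0%N then rx1 else rx3.

Lemma det_small n (N : 'M[R]_n) : (0 < n)%N -> (forall i j, N i j = 0) -> \det N = 0.
Proof.
case: n N => // n N _ h.
have -> : N = 0 by apply/matrixP => i j; rewrite h mxE.
by rewrite det0.
Qed.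

Lemma exist_motif : exists (k : nat) (kap Jf : 'I_k -> 'I_4),
         [/\ CS_triple eta kap Jf,
             unstable_positive (csmat eta kap Jf),
             non_autocatalytic (csmat eta kap Jf),
             motif_species kap = [set sL1; sL2] &
             motif_reactions Jf = [set rx1; rx3]].
Proof.
exists 2%N, kap2, Jf2; split.
- split.
  + by move=> l1 l2; elim/ord2_cases: l1; elim/ord2_cases: l2 => //= /(congr1 val).
  + by move=> l1 l2; elim/ord2_cases: l1; elim/ord2_cases: l2 => //= /(congr1 val).
  + by move=> l; elim/ord2_cases: l; rewrite reactE.
- split => //.
  + rewrite /sign_unstable det2 !csE /=; lra.
  + move=> A /andP [A0 A2].
    have /cards1P [x Ax] : #|A| == 1%N.
      by rewrite eqn_leq -ltnS A2 A0.
    rewrite /sign_unstable det_small ?mulr0 ?ltxx //.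
    move=> i j; rewrite mxE.
    have hA : forall y, y \in A -> y = x by move=> y; rewrite Ax inE => /eqP.
    rewrite (hA _ (enum_valP i)) (hA _ (enum_valP j)).
    by rewrite csE; clear hA Ax; elim/ord2_cases: x.
- exists 0, 1; split => //; rewrite csE /=; lra.
- by rewrite /motif_species imset2.
- by rewrite /motif_reactions imset2.
Qed.

Lemma uniq_motif (k : nat) (kap Jf : 'I_k -> 'I_4) :
         CS_triple eta kap Jf ->
         unstable_positive (csmat eta kap Jf) ->
         non_autocatalytic (csmat eta kap Jf) ->
         motif_species kap = [set sL1; sL2] /\
         motif_reactions Jf = [set rx1; rx3].
Proof.
move=> [ik iJ hr] [k0 hsu _] [i0 [j0 [ij _]]].
case: k kap Jf ik iJ hr hsu k0 i0 j0 ij => [|[|[|k]]] kap Jf ik iJ hr hsu k0 i0 j0 ij //.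
- by move: ij; rewrite (ord1 i0) (ord1 j0) eqxx.
- move: hsu; rewrite /sign_unstable det2 !csE /= expr1 mulN1r.
  rewrite -!intrM -intrB -mulrNz ltr0z => hdet.
  have n01 : (0 : 'I_2) != 1 by [].
  have nk : kap 0 != kap 1 by apply: contraNneq n01 => /ik.
  have nJ : Jf 0 != Jf 1 by apply: contraNneq n01 => /iJ.
  have r0 := hr 0; have r1 := hr 1; rewrite (reactE heta) in r0; rewrite (reactE heta) in r1.
  have /andP [hk hj] := @enum2 (kap 0) (kap 1) (Jf 0) (Jf 1) r0 r1 nk nJ hdet.
  rewrite /motif_species /motif_reactions !imset2.
  split.
  + by case/orP: hk => /andP [/eqP -> /eqP ->] //; rewrite setUC.
  + by case/orP: hj => /andP [/eqP -> /eqP ->] //; rewrite setUC.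
- exfalso; move: hsu; rewrite /sign_unstable.
  set A := [set kap l | l : 'I_k.+3].
  have cA : #|A| = k.+3 by rewrite card_imset // card_ord.
  have : (sL1 \in A) && (sI1 \in A) || (sL2 \in A) && (sI2 \in A).
    case E1: (sL1 \in A); case E2: (sI1 \in A); case E3: (sL2 \in A);
    case E4: (sI2 \in A) => //=;
    first [ have h := small E1 E3 isT | have h := small E1 E4 isT
          | have h := small E2 E3 isT | have h := small E2 E4 isT ];
    by rewrite cA in h.
  case/orP => /andP [/imsetP [m1 _ e1] /imsetP [m2 _ e2]].
  + rewrite (det_pair Jf (esym e1) (esym e2)) ?mulr0 ?ltxx //.
    by elim/ord4_cases.
  + rewrite (det_pair Jf (esym e1) (esym e2)) ?mulr0 ?ltxx //.
    by elim/ord4_cases.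
Qed.
End S.

Unset Implicit Arguments.

Theorem proposition4p4 (R : rcfType) (eta : R) (heta : 0 < eta) :
  [/\ (* capacity for zero-eigenvalue bifurcation *)
      (exists D : 'M[R]_4, admissible eta D /\ restr_singular (jac eta D)),
      (* bifurcation condition *)
      (forall D : 'M[R]_4, admissible eta D ->
         (restr_singular (jac eta D) <-> d2_ro D + dI_re D = d1_ro D)),
      (* instability requires d2 r_o + dI r_e < d1 r_o *)
      (forall D : 'M[R]_4, admissible eta D ->
         restr_unstable (jac eta D) -> d2_ro D + dI_re D < d1_ro D),
      (* existence of the instability motif {L1, L2}, {1, 3} *)
      (exists (k : nat) (kap Jf : 'I_k -> 'I_4),
         [/\ CS_triple eta kap Jf,
             unstable_positive (csmat eta kap Jf),
             non_autocatalytic (csmat eta kap Jf),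
             motif_species kap = [set sL1; sL2] &
             motif_reactions Jf = [set rx1; rx3]]) &
      (* uniqueness of the instability motif *)
      (forall (k : nat) (kap Jf : 'I_k -> 'I_4),
         CS_triple eta kap Jf ->
         unstable_positive (csmat eta kap Jf) ->
         non_autocatalytic (csmat eta kap Jf) ->
         motif_species kap = [set sL1; sL2] /\
         motif_reactions Jf = [set rx1; rx3])].
Proof.
have pos : forall D, admissible eta D ->
  [/\ 0 < D rx1 sL1, 0 < D rx1 sL2 & 0 < D rx2 sI2].
  by move=> D [H _ _ _ _]; split; apply: H; rewrite (reactE heta).
split.
- exists (Dmat 2 1 1); split.
    by apply: admD => //; lra.
  rewrite jacE; apply/sing; try lra.
- move=> D hD; have [ha hb hc] := pos D hD.
  rewrite {1}(admE heta hD) jacE /d1_ro /d2_ro /dI_re; exact: sing.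
- move=> D hD; have [ha hb hc] := pos D hD.
  rewrite {1}(admE heta hD) jacE /d1_ro /d2_ro /dI_re; exact: unst.
- exact: exist_motif.
- exact: uniq_motif.
Qed.
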